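(* Let $N\ge1$, $z_1,\dots,z_N\in\mathbb{C}^*$, $n_1,\dots,n_N\in\mathbb{C}$, and put $z=z_1z_2\cdots z_N$. Let \[ \Phi(X)=\sum_{i=1}^N z_1^{-1}\cdots z_{i-1}^{-1}z_{i+1}\cdots z_N\,a_i\in U,\qquad \Phi(Y)=\sum_{i=1}^N z_1^{-1}\cdots z_{i-1}^{-1}(z_i^2-z_i^{-2})z_{i+1}\cdots z_N\,b_i\in U', \] where $U=\mathrm{span}(a_1,\dots,a_N)\subset\mathrm{Cl}_N$ and $U'=\mathrm{span}(b_1,\dots,b_N)\subset \mathrm{Cl}_N$. Let $\langle\cdot,\cdot\rangle:U\times U'\to\mathbb{C}$ be the pairing with $\langle a_j,b_i\rangle=\delta_{ij}$, and set $W=\{w\in U:\langle w,\Phi(Y)\rangle=0\}$ and $W'=\{w'\in U':\langle \Phi(X),w'\rangle=0\}$. Assume $z^2-z^{-2}\neq 0$. Then: (1) $U=\mathbb{C}\Phi(X)\oplus W$ and $U'=\mathbb{C}\Phi(Y)\oplus W'$; (2) the subspaces $W$ and $W'$ generate a subalgebra $C(X,Y)$ of $\mathrm{Cl}_N$ which is isomorphic to the Clifford algebra $\mathrm{Cl}_{\dim W}$, and $C(X,Y)$ is the super-commutant in $\mathrm{Cl}_N$ of the subalgebra generated by $\Phi(X)$ and $\Phi(Y)$.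
   Context: $\mathrm{Cl}_N$ is the Clifford superalgebra over $\mathbb{C}$ generated by odd elements $a_1,\dots,a_N,b_1,\dots,b_N$ with relations $a_ia_j+a_ja_i=0$, $b_ib_j+b_jb_i=0$, $a_ib_j+b_ja_i=\delta_{ij}$. The elements $\Phi(X),\Phi(Y)$ are the images of the generators $X,Y$ of quantum $\mathfrak{gl}(1|1)$ under the homomorphism $\Phi$ realizing the tensor product $V_{z_1,n_1}\otimes\cdots\otimes V_{z_N,n_N}$ on the Clifford module $\bigwedge^\bullet U$. The super-commutant of a subalgebra $A$ is the span of the homogeneous elements $c$ with $ac=(-1)^{|a||c|}ca$ for all homogeneous $a\in A$. *)

(* Defs.v *)
From HB Require Import structures.
From mathcomp Require Import all_boot all_order all_algebra all_field.
Set Implicit Arguments. Unset Strict Implicit. Unset Printing Implicit Defensive.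
Import GRing.Theory Num.Theory.
Local Open Scope ring_scope.

(* The ground field is an arbitrary numClosedFieldType K
   (e.g. the complex numbers R[i]).  The Clifford superalgebra Cl_N is
   represented by an arbitrary finite-dimensional K-algebra A together with
   elements a_i, b_i (i < N) satisfying the Clifford relations, generating A,
   and with dim A = 4^N: such an (A, a, b) is exactly Cl_N (up to a unique
   isomorphism fixing the generators). *)

Section Clifford.
Variables (K : fieldType) (A : falgType K).

Definition cl_rel (n : nat) (a b : 'I_n -> A) : Prop :=
  [/\ forall i j, a i * a j + a j * a i = 0,
      forall i j, b i * b j + b j * b i = 0 &
      forall i j, a i * b j + b j * a i = (i == j)%:R].

Definition gen_span (n : nat) (a b : 'I_n -> A) : {vspace A} :=
  (<<[seq a i | i <- enum 'I_n]>> + <<[seq b i | i <- enum 'I_n]>>)%VS.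

(* The subalgebra E is (via the generators a, b lying in E) a Clifford
   algebra Cl_n: generated by elements satisfying the Clifford relations,
   and of the dimension 4^n of Cl_n. *)
Definition is_clifford_on (E : {vspace A}) (n : nat) (a b : 'I_n -> A) : Prop :=
  [/\ forall i, a i \in E /\ b i \in E,
      cl_rel a b,
      agenv (gen_span a b) = E &
      \dim E = 4 ^ n]%N.

Definition cl_mono (n : nat) (a b : 'I_n -> A) (ST : {set 'I_n} * {set 'I_n}) : A :=
  (\prod_(i < n | i \in ST.1) a i) * (\prod_(j < n | j \in ST.2) b j).

(* Z/2-grading of the Clifford superalgebra (generators are odd):
   the parity-p part is spanned by the monomials of total degree of parity p. *)
Definition cl_deg_par (n : nat) (ST : {set 'I_n} * {set 'I_n}) : bool :=
  odd (#|ST.1| + #|ST.2|).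

Definition cl_monos (n : nat) (a b : 'I_n -> A) (p : bool) : seq A :=
  map (cl_mono a b)
    (filter (fun ST => cl_deg_par ST == p) (enum {: {set 'I_n} * {set 'I_n}})).

Definition cl_part (n : nat) (a b : 'I_n -> A) (p : bool) : {vspace A} :=
  <<cl_monos a b p>>%VS.

Definition supercomm_hom (n : nat) (a b : 'I_n -> A) (B : {vspace A}) (p : bool) (c : A) : Prop :=
  c \in cl_part a b p /\
  forall (q : bool) (x : A), x \in (B :&: cl_part a b q)%VS ->
     x * c = (-1) ^+ (p && q) * c * x.

Definition in_supercommutant (n : nat) (a b : 'I_n -> A) (B : {vspace A}) (x : A) : Prop :=
  exists (k : nat) (c : 'I_k -> A) (l : 'I_k -> K),
    (forall t, exists p, supercomm_hom a b B p (c t)) /\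
    x = \sum_(t < k) l t *: c t.

Definition spanU (n : nat) (a : 'I_n -> A) : {vspace A} :=
  <<[seq a i | i <- enum 'I_n]>>%VS.

(* The pairing U x U' -> K with <a_j, b_i> = delta_ij (coordinates in the
   bases (a_i) and (b_i)). *)
Definition cl_pairing (n : nat) (a b : 'I_n -> A) (u u' : A) : K :=
  \sum_(i < n) coord [tuple a j | j < n] i u * coord [tuple b j | j < n] i u'.

Definition PhiX (n : nat) (z : 'I_n -> K) (a : 'I_n -> A) : A :=
  \sum_(i < n) ((\prod_(j < n | (j < i)%N) (z j)^-1) *
                (\prod_(j < n | (i < j)%N) z j)) *: a i.

Definition PhiY (n : nat) (z : 'I_n -> K) (b : 'I_n -> A) : A :=
  \sum_(i < n) ((\prod_(j < n | (j < i)%N) (z j)^-1) * ((z i) ^+ 2 - (z i) ^- 2) *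
                (\prod_(j < n | (i < j)%N) z j)) *: b i.

End Clifford.

(* Main.v *)
Require Import Defs.
From HB Require Import structures.
From mathcomp Require Import all_boot all_order all_algebra all_field.
From mathcomp Require Import ring.
Set Implicit Arguments. Unset Strict Implicit. Unset Printing Implicit Defensive.
Import GRing.Theory Num.Theory.
Local Open Scope ring_scope.


Section Gen.
Variables (K : fieldType) (A : falgType K).
Implicit Types (U V S T : {vspace A}) (x y : A).

Lemma agenv_closure V S : 1 \in S ->
  (forall v x, v \in V -> x \in S -> v * x \in S) -> (agenv V <= S)%VS.
Proof.
move=> S1 HS; apply: agenv_sub_modl; first by rewrite -memvE.
by apply/prodvP => v x Vv Sx; apply: HS.
Qed.

Lemma agenv_ind V (f g : 'End(A)) : f 1 = g 1 ->
  (forall v x, v \in V -> f x = g x -> f (v * x) = g (v * x)) ->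
  forall x, x \in agenv V -> f x = g x.
Proof.
move=> h1 hS x Ex.
have: x \in lker (f - g).
  apply: subvP Ex; apply: agenv_closure.
  - by rewrite memv_ker !lfun_simp h1 subrr.
  - move=> v y Vv; rewrite !memv_ker !lfun_simp subr_eq0 => /eqP hy.
    by rewrite (hS _ _ Vv hy) subrr.
by rewrite memv_ker !lfun_simp subr_eq0 => /eqP.
Qed.

Lemma agenv_mul V x y : x \in agenv V -> y \in agenv V -> x * y \in agenv V.
Proof. by move=> hx hy; rewrite -agenvM; apply: memv_mul. Qed.
Lemma agenv_one V : 1 \in agenv V. Proof. by rewrite memvE sub1_agenv. Qed.
Lemma agenv_gen V v : v \in V -> v \in agenv V.
Proof. by move=> h; apply: subvP (sub_agenv V) _ h. Qed.

Lemma span_coord (s : seq A) v : v \in <<s>>%VS ->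
  v = \sum_(i < size s) coord (in_tuple s) i v *: s`_i.
Proof. exact: (@coord_span _ _ _ (in_tuple s)). Qed.

Lemma span_prod_sub (s t : seq A) (W : {vspace A}) : (forall x y, x \in s -> y \in t -> x * y \in W) ->
  (<<s>> * <<t>> <= W)%VS.
Proof.
move=> h; apply/prodvP => u v /span_coord -> /span_coord ->.
rewrite mulr_suml; apply: memv_suml => i _; rewrite mulr_sumr; apply: memv_suml => j _.
rewrite -scalerAl -scalerAr; apply: memvZ; apply: memvZ; apply: h; exact: mem_nth.
Qed.

Lemma line_span_absorb x (s : seq A) : (forall y, y \in s -> x * y \in <<s>>%VS) ->
  (<[x]> * <<s>> <= <<s>>)%VS.
Proof. by move=> h; rewrite -span_seq1; apply: span_prod_sub => u y; rewrite inE => /eqP ->; exact: h. Qed.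

Lemma line_span_comm x (s : seq A) :
  (forall y, y \in s -> x * y = y * x \/ x * y = - (y * x)) ->
  (<[x]> * <<s>> <= <<s>> * <[x]>)%VS.
Proof.
move=> h; rewrite -span_seq1; apply: span_prod_sub => u y; rewrite inE => /eqP -> ys.
by case: (h y ys) => ->; rewrite ?memvN; apply: memv_mul; [exact: memv_span | exact: memv_span1|exact: memv_span | exact: memv_span1].
Qed.

Lemma span_mul_sub (s : seq A) T : (forall u, u \in s -> (<[u]> * T <= T)%VS) ->
  (<<s>> * T <= T)%VS.
Proof.
move=> h; rewrite span_def; elim: s h => [|u s IH] h; first by rewrite big_nil prod0v sub0v.
rewrite big_cons prodvDl subv_add h ?mem_head //= IH // => v vs; apply: h.
by rewrite inE vs orbT.
Qed.

Definition pprod (I : Type) (P : I -> {vspace A}) (r : seq I) : {vspace A} :=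
  foldr (fun j V => P j * V)%VS 1%VS r.

Lemma pprod_absorb (I : eqType) (P : I -> {vspace A}) x i r : i \in r ->
  (forall j, j \in r -> j != i -> (<[x]> * P j <= P j * <[x]>)%VS) ->
  (<[x]> * P i <= P i)%VS -> (<[x]> * pprod P r <= pprod P r)%VS.
Proof.
rewrite /pprod.
elim: r => // j r IH; rewrite inE /= => hi hc ha.
case: (eqVneq j i) => [-> | nji].
  by rewrite prodvA; apply: prodvSl.
have hir : i \in r by move: hi; rewrite eq_sym (negPf nji).
rewrite prodvA; apply: subv_trans (prodvSl _ (hc j (mem_head _ _) nji)) _.
rewrite -prodvA; apply: prodvSr; apply: IH => // k kr; apply: hc.
by rewrite inE kr orbT.
Qed.

Lemma dim_pprod (I : eqType) (P : I -> {vspace A}) r m :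
  (forall j, j \in r -> \dim (P j) <= m)%N -> (\dim (pprod P r) <= m ^ size r)%N.
Proof.
rewrite /pprod.
elim: r => [|j r IH] h /=; first by rewrite dimv1.
apply: leq_trans (dim_prodv _ _) _; rewrite expnS leq_mul ?h ?mem_head //.
by apply: IH => k kr; apply: h; rewrite inE kr orbT.
Qed.

Lemma pprod1 (I : Type) (P : I -> {vspace A}) r : (forall j, 1 \in P j) -> 1 \in pprod P r.
Proof.
rewrite /pprod.
elim: r => [|j r IH] h /=; first exact: memv_line.
by have := memv_mul (h j) (IH h); rewrite mulr1.
Qed.

Lemma prod_scomm (I : eqType) (r : seq I) (P : pred I) (F : I -> A) (s : I -> K) x :
  (forall j, j \in r -> P j -> x * F j = s j *: (F j * x)) ->
  x * \prod_(j <- r | P j) F j = (\prod_(j <- r | P j) s j) *: (\prod_(j <- r | P j) F j * x).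
Proof.
elim: r => [|j r IH] h; first by rewrite !big_nil scale1r mul1r mulr1.
have h' : forall k, k \in r -> P k -> x * F k = s k *: (F k * x).
  by move=> k kr; apply: h; rewrite inE kr orbT.
rewrite !big_cons; case: ifP => Pj; last exact: IH.
rewrite mulrA h ?mem_head // -scalerAl -(mulrA (F j) x) IH // scalerAr scalerA.
by rewrite -scalerAr mulrA.
Qed.

Lemma scale1_inj (k1 k2 : K) : k1 *: (1 : A) = k2 *: 1 -> k1 = k2.
Proof.
move/eqP; rewrite -subr_eq0 -scalerBl scaler_eq0 oner_eq0 orbF subr_eq0.
by move/eqP.
Qed.

End Gen.


Section Cl.
Variables (K : fieldType) (A : falgType K).
Hypothesis h2 : (2%:R : K) != 0.

Lemma twice0 (x : A) : x + x = 0 -> x = 0.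
Proof.
move=> h; have: (2%:R : K) *: x = 0 by rewrite scaler_nat mulr2n h.
by move/eqP; rewrite scaler_eq0 (negPf h2) /= => /eqP.
Qed.

Lemma amullE (u x : A) : amull u x = u * x. Proof. by rewrite lfunE. Qed.
Lemma amulrE (u x : A) : amulr u x = x * u. Proof. by rewrite lfunE. Qed.

Lemma comm2 (x y w : A) : x * y = - (y * x) -> x * w = - (w * x) -> x * (y * w) = y * w * x.
Proof. by move=> h1 h2'; rewrite mulrA h1 mulNr -(mulrA y x w) h2' mulrN opprK mulrA. Qed.

Lemma commf (x y : A) : x * y = y * x -> x * (1 - y *+ 2) = (1 - y *+ 2) * x.
Proof. by move=> h; rewrite mulrBr mulrBl mulr1 mul1r mulrnAr mulrnAl h. Qed.

Lemma f2 (t : A) : t * t = t -> (1 - t *+ 2) * (1 - t *+ 2) = 1.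
Proof.
move=> ht; rewrite mulrBl mul1r mulrBr mulr1 mulrnAl mulrnAr ht.
rewrite [X in _ - (_ - X)]mulr2n.
have e : t *+ 2 - (t *+ 2 + t *+ 2) = - (t *+ 2) by rewrite opprD addrA subrr sub0r.
by rewrite e opprK subrK.
Qed.

Variables (n : nat) (c d : 'I_n -> A).
Hypothesis hcl : cl_rel c d.

Lemma cc_anti i j : c i * c j = - (c j * c i).
Proof. by case: hcl => h _ _; apply/eqP; rewrite -addr_eq0; apply/eqP. Qed.
Lemma dd_anti i j : d i * d j = - (d j * d i).
Proof. by case: hcl => _ h _; apply/eqP; rewrite -addr_eq0; apply/eqP. Qed.
Lemma cc0 i : c i * c i = 0. Proof. by case: hcl => h _ _; apply: twice0. Qed.
Lemma dd0 i : d i * d i = 0. Proof. by case: hcl => _ h _; apply: twice0. Qed.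
Lemma cd_anti i j : i != j -> c i * d j = - (d j * c i).
Proof.
by case: hcl => _ _ h /negPf hij; apply/eqP; rewrite -addr_eq0 h hij.
Qed.
Lemma dc_anti i j : i != j -> d i * c j = - (c j * d i).
Proof. by move=> hij; rewrite (@cd_anti j i) ?opprK // eq_sym. Qed.
Lemma dc_rel i : d i * c i = 1 - c i * d i.
Proof. by case: hcl => _ _ h; have := h i i; rewrite eqxx /= mulr1n => <-; rewrite (addrC (c i * d i)) addrK. Qed.

Definition Pcd (j : 'I_n) : {vspace A} := span [:: 1; c j; d j; c j * d j].

Lemma agenv_pprod : (agenv (gen_span c d) <= pprod Pcd (enum 'I_n))%VS.
Proof.
apply: agenv_sub_modl.
  by rewrite -memvE; apply: pprod1 => j; apply: memv_span; rewrite inE eqxx.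
have m1 j : 1 \in Pcd j by apply: memv_span; rewrite !inE eqxx.
have mc j : c j \in Pcd j by apply: memv_span; rewrite !inE eqxx !orbT.
have md j : d j \in Pcd j by apply: memv_span; rewrite !inE eqxx !orbT.
have mcd j : c j * d j \in Pcd j by apply: memv_span; rewrite !inE eqxx !orbT.
rewrite /gen_span prodvDl subv_add; apply/andP; split; apply: span_mul_sub => u /mapP [i _ ->].
- apply: (pprod_absorb (i := i)); rewrite ?mem_enum //.
    move=> j _ nji; apply: line_span_comm => y; rewrite !inE => /or4P [] /eqP ->.
    + by left; rewrite mulr1 mul1r.
    + by right; rewrite cc_anti.
    + by right; rewrite cd_anti // eq_sym.
    + by left; apply: comm2; [rewrite cc_anti | rewrite cd_anti // eq_sym].
  apply: line_span_absorb => y; rewrite !inE => /or4P [] /eqP ->.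
  + by rewrite mulr1.
  + by rewrite cc0 mem0v.
  + by [].
  + by rewrite mulrA cc0 mul0r mem0v.
- apply: (pprod_absorb (i := i)); rewrite ?mem_enum //.
    move=> j _ nji; apply: line_span_comm => y; rewrite !inE => /or4P [] /eqP ->.
    + by left; rewrite mulr1 mul1r.
    + by right; rewrite dc_anti // eq_sym.
    + by right; rewrite dd_anti.
    + by left; apply: comm2; [rewrite dc_anti // eq_sym | rewrite dd_anti].
  apply: line_span_absorb => y; rewrite !inE => /or4P [] /eqP ->.
  + by rewrite mulr1.
  + by rewrite dc_rel; apply: memvB; [exact: (m1 i) | exact: (mcd i)].
  + by rewrite dd0 mem0v.
  + by rewrite mulrA dc_rel mulrBl mul1r -mulrA dd0 mulr0 subr0.
Qed.

Lemma dim_agenv_cl : (\dim (agenv (gen_span c d)) <= 4 ^ n)%N.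
Proof.
apply: leq_trans (dimvS agenv_pprod) _.
have := @dim_pprod _ _ _ Pcd (enum 'I_n) 4; rewrite size_enum_ord; apply => j _.
exact: (leq_trans (dim_span _)).
Qed.

Lemma prod_scomm0 (I : eqType) (r : seq I) (F : I -> A) (s : I -> K) x :
  (forall j, j \in r -> x * F j = s j *: (F j * x)) ->
  x * \prod_(j <- r) F j = (\prod_(j <- r) s j) *: (\prod_(j <- r) F j * x).
Proof. by move=> h; apply: prod_scomm => j jr _; apply: h. Qed.

Lemma prod_sq1 (I : eqType) (r : seq I) (F : I -> A) : uniq r ->
  (forall i j, i != j -> F i * F j = F j * F i) -> (forall i, F i * F i = 1) ->
  (\prod_(j <- r) F j) * (\prod_(j <- r) F j) = 1.
Proof.
move=> ur hc h1; elim: r ur => [|j r IH] /=; first by rewrite big_nil mulr1.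
case/andP => jr ur; rewrite big_cons.
have hcomm : F j * \prod_(k <- r) F k = \prod_(k <- r) F k * F j.
  rewrite (prod_scomm0 (s := fun=> 1)) ?big1_eq ?scale1r // => k kr.
  rewrite scale1r hc //; apply: contraNneq jr => ->; done.
rewrite -mulrA (mulrA (\prod_(k <- r) F k)) -hcomm -mulrA mulrA h1 mul1r IH //.
Qed.

Lemma neg2 (y : A) : - (y - y *+ 2) = y.
Proof. by rewrite mulr2n opprB addrK. Qed.

Lemma neg2b (y : A) : y - y *+ 2 = - y.
Proof. by rewrite -[in RHS](neg2 y) opprK. Qed.

Definition fcd j := 1 - (c j * d j) *+ 2.
Definition gam := \prod_(j <- enum 'I_n) fcd j.

Lemma c_t i j : i != j -> c i * (c j * d j) = c j * d j * c i.
Proof. by move=> h; apply: comm2; [exact: cc_anti | exact: cd_anti]. Qed.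
Lemma d_t i j : i != j -> d i * (c j * d j) = c j * d j * d i.
Proof. by move=> h; apply: comm2; [exact: dc_anti | exact: dd_anti]. Qed.
Lemma t_t i j : i != j -> (c i * d i) * (c j * d j) = (c j * d j) * (c i * d i).
Proof. by move=> h; rewrite -mulrA d_t // mulrA c_t // -mulrA. Qed.
Lemma tc i : c i * d i * c i = c i.
Proof. by rewrite -mulrA dc_rel mulrBr mulr1 mulrA cc0 mul0r subr0. Qed.
Lemma dt i : d i * (c i * d i) = d i.
Proof. by rewrite mulrA dc_rel mulrBl mul1r -mulrA dd0 mulr0 subr0. Qed.
Lemma tt_idem i : (c i * d i) * (c i * d i) = c i * d i.
Proof. by rewrite mulrA tc. Qed.

Lemma c_f_same i : c i * fcd i = - (fcd i * c i).
Proof.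
rewrite /fcd mulrBr mulrBl mulr1 mul1r mulrnAr mulrnAl mulrA cc0 mul0r mul0rn subr0 tc.
exact/esym/neg2.
Qed.
Lemma d_f_same i : d i * fcd i = - (fcd i * d i).
Proof.
rewrite /fcd mulrBr mulrBl mulr1 mul1r mulrnAr mulrnAl dt -mulrA dd0 mulr0 mul0rn subr0.
exact: neg2b.
Qed.

Lemma gam_c i : gam * c i = - (c i * gam).
Proof.
have key : c i * gam = -1 *: (gam * c i).
  rewrite /gam (prod_scomm0 (s := fun j => if j == i then -1 else 1)).
    by rewrite (bigD1_seq i) ?mem_enum ?enum_uniq //= eqxx big1 ?mulr1 // => j /negPf ->.
  move=> j _; case: eqP => [-> | /eqP nji]; first by rewrite c_f_same scaleN1r.
  by rewrite scale1r; apply: commf; apply: c_t; rewrite eq_sym.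
by rewrite key scaleN1r opprK.
Qed.

Lemma gam_d i : gam * d i = - (d i * gam).
Proof.
have key : d i * gam = -1 *: (gam * d i).
  rewrite /gam (prod_scomm0 (s := fun j => if j == i then -1 else 1)).
    by rewrite (bigD1_seq i) ?mem_enum ?enum_uniq //= eqxx big1 ?mulr1 // => j /negPf ->.
  move=> j _; case: eqP => [-> | /eqP nji]; first by rewrite d_f_same scaleN1r.
  by rewrite scale1r; apply: commf; apply: d_t; rewrite eq_sym.
by rewrite key scaleN1r opprK.
Qed.

Lemma gam2 : gam * gam = 1.
Proof.
apply: prod_sq1; first exact: enum_uniq.
  move=> i j hij; rewrite [fcd j]/fcd; apply: commf; apply/esym; rewrite /fcd.
  by apply: commf; apply: t_t; rewrite eq_sym.
by move=> i; apply: f2; apply: tt_idem.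
Qed.

Lemma gam_prod (S : {set 'I_n}) (F : 'I_n -> A) : (forall j, gam * F j = - (F j * gam)) ->
  gam * \prod_(j < n | j \in S) F j = (-1) ^+ #|S| *: (\prod_(j < n | j \in S) F j * gam).
Proof.
move=> h; rewrite (prod_scomm (s := fun=> -1)) ?prodr_const // => j _ _.
by rewrite h scaleN1r.
Qed.

Lemma gam_mono' (S T : {set 'I_n}) :
  gam * ((\prod_(i < n | i \in S) c i) * (\prod_(i < n | i \in T) d i)) =
  (-1) ^+ odd (#|S| + #|T|) *: ((\prod_(i < n | i \in S) c i) * (\prod_(i < n | i \in T) d i) * gam).
Proof.
rewrite mulrA (gam_prod S gam_c).
rewrite -scalerAl -(mulrA _ gam) (gam_prod T gam_d).
rewrite scalerAr scalerA -exprD signr_odd.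
by rewrite -scalerAr mulrA.
Qed.

Lemma gam_mono ST : gam * cl_mono c d ST = (-1) ^+ cl_deg_par ST *: (cl_mono c d ST * gam).
Proof. exact: gam_mono'. Qed.

Lemma parP (p : bool) x : x \in cl_part c d p -> gam * x = (-1) ^+ p *: (x * gam).
Proof.
move=> hx; have: x \in lker (amull gam - (-1) ^+ p *: amulr gam).
  apply: subvP hx; apply/span_subvP => m /mapP [ST]; rewrite mem_filter => /andP [/eqP hp _] ->.
  by rewrite memv_ker add_lfunE opp_lfunE scale_lfunE amullE amulrE gam_mono hp subrr.
by rewrite memv_ker add_lfunE opp_lfunE scale_lfunE amullE amulrE subr_eq0 => /eqP.
Qed.

End Cl.


Lemma big_ord_nat (R : Type) (idx : R) (op : Monoid.law idx) m (P : pred 'I_m.+1)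
  (F : 'I_m.+1 -> R) :
  \big[op/idx]_(j < m.+1 | P j) F j = \big[op/idx]_(0 <= i < m.+1 | P (inord i)) F (inord i).
Proof. by rewrite big_mkord; apply: eq_big => [i|i _]; rewrite inord_val. Qed.

Lemma prepend (R : pzRingType) m (F : 'I_m.+1 -> R) (k : 'I_m.+1) (S : {set 'I_m.+1}) :
  (forall j, j \in S -> k < j)%N ->
  \prod_(j < m.+1 | j \in k |: S) F j = F k * \prod_(j < m.+1 | j \in S) F j.
Proof.
move=> hS; rewrite !big_ord_nat.
have kl : (k < m.+1)%N := ltn_ord k.
rewrite (big_cat_nat (leq0n k) (ltnW kl)) /=.
rewrite (big_cat_nat (leq0n k.+1) kl) /=.
rewrite big_nat_cond big1 ?mul1r; last first.
  move=> i /andP [/andP [_ hi] hP]; exfalso; move: hP.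
  rewrite in_setU1; case/orP => [/eqP hik | hiS].
    by move: (hi); rewrite -hik inordK ?ltnn // (ltn_trans hi kl).
  by have := hS _ hiS; rewrite inordK ?(ltn_trans hi kl) // => /(ltn_trans hi); rewrite ltnn.
rewrite [X in _ = _ * (X * _)]big_nat_cond [X in _ = _ * (X * _)]big1 ?mul1r; last first.
  move=> i /andP [/andP [_ hi] hP]; have := hS _ hP.
  by rewrite inordK ?(leq_trans hi kl) // ltnNge -ltnS hi.
rewrite big_ltn_cond // inord_val in_setU1 eqxx /=.
congr (_ * _); rewrite big_nat_cond [RHS]big_nat_cond; apply: eq_bigl => i.
case: (boolP (k < i < m.+1)%N) => //= /andP [ki im].
rewrite in_setU1; have -> // : (inord i == k) = false.
by apply/negbTE; apply: contraTneq ki => <-; rewrite inordK // ltnn.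
Qed.

Section Span.
Variables (K : fieldType) (A : falgType K).
Hypothesis h2 : (2%:R : K) != 0.
Variables (m : nat) (c d : 'I_m.+1 -> A).
Hypothesis hcl : cl_rel c d.
Local Notation n := m.+1.

Definition mono (S T : {set 'I_n}) :=
  (\prod_(i < n | i \in S) c i) * (\prod_(i < n | i \in T) d i).
Lemma cl_monoE ST : cl_mono c d ST = mono ST.1 ST.2. Proof. by []. Qed.

Lemma Lc (k : 'I_n) (S T : {set 'I_n}) : (forall j, j \in S -> k < j)%N ->
  c k * mono S T = mono (k |: S) T.
Proof. by move=> h; rewrite /mono mulrA -prepend. Qed.

Lemma Ld (k : 'I_n) (S T : {set 'I_n}) : (forall j, j \in T -> k < j)%N -> k \notin S ->
  d k * mono S T = (-1) ^+ #|S| *: mono S (k |: T).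
Proof.
move=> hT hS; rewrite /mono mulrA (prod_scomm (F := c) (x := d k) (s := fun=> -1)); last first.
  move=> j _ jS; rewrite (dc_anti hcl) ?scaleN1r //; apply: contraNneq hS => ->; done.
rewrite prodr_const -scalerAl -mulrA -prepend //.
Qed.

Definition geqk (k : nat) (ST : {set 'I_n} * {set 'I_n}) : bool :=
  [forall j : 'I_n, ((j \in ST.1) || (j \in ST.2)) ==> (k <= j)%N].

Definition Mset k : seq A :=
  map (cl_mono c d) (filter (geqk k) (enum {: {set 'I_n} * {set 'I_n}})).

Lemma mem_M k ST : geqk k ST -> cl_mono c d ST \in <<Mset k>>%VS.
Proof. by move=> h; apply: memv_span; apply: map_f; rewrite mem_filter h mem_enum. Qed.

Definition Qn (j : nat) := Pcd c d (inord j).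

Lemma pprod_Mset mm k : (k + mm = n)%N -> (pprod Qn (iota k mm) <= <<Mset k>>)%VS.
Proof.
elim: mm k => [|mm IH] k hk /=.
  rewrite /pprod /= -memvE.
  have -> : (1 : A) = cl_mono c d (set0, set0).
    by rewrite cl_monoE /mono !big_pred0 ?mulr1 // => i; rewrite in_set0.
  by apply: mem_M; apply/forallP => j; rewrite !in_set0.
have kn : (k < n)%N by rewrite -hk -addSnnS leq_addr.
have IH' : (pprod Qn (iota k.+1 mm) <= <<Mset k.+1>>)%VS by apply: IH; rewrite addSnnS.
rewrite /pprod /=; apply: subv_trans (prodvSr _ IH') _.
apply: span_prod_sub => y x; set kk : 'I_n := inord k.
have vk : kk = k :> nat by rewrite inordK.
move=> hy /mapP [[S T]]; rewrite mem_filter => /andP [/forallP hg _] ->.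
have hS : forall j, j \in S -> (kk < j)%N.
  by move=> j jS; rewrite vk; have := hg j; rewrite jS /=.
have hT : forall j, j \in T -> (kk < j)%N.
  by move=> j jT; rewrite vk; have := hg j; rewrite jT orbT /=.
have nS : kk \notin S by apply/negP => /hS; rewrite ltnn.
have gk : forall S' T' : {set 'I_n}, (forall j, j \in S' -> (kk <= j)%N) ->
    (forall j, j \in T' -> (kk <= j)%N) -> geqk k (S', T').
  move=> S' T' h1 h3; apply/forallP => j /=; apply/implyP => /orP [/h1|/h3]; by rewrite vk.
have gS : forall j, j \in kk |: S -> (kk <= j)%N.
  by move=> j; rewrite in_setU1 => /orP [/eqP -> //| /hS /ltnW].
have gT : forall j, j \in kk |: T -> (kk <= j)%N.
  by move=> j; rewrite in_setU1 => /orP [/eqP -> //| /hT /ltnW].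
have gS0 : forall j, j \in S -> (kk <= j)%N by move=> j /hS /ltnW.
have gT0 : forall j, j \in T -> (kk <= j)%N by move=> j /hT /ltnW.
move: hy; rewrite !inE => /or4P [] /eqP ->.
- by rewrite mul1r; apply: mem_M; apply: gk.
- by rewrite cl_monoE /= Lc // -[mono _ _]/(cl_mono c d (kk |: S, T)); apply: mem_M; apply: gk.
- rewrite cl_monoE /= Ld //; apply: memvZ.
  by rewrite -[mono _ _]/(cl_mono c d (S, kk |: T)); apply: mem_M; apply: gk.
- rewrite cl_monoE /= -mulrA Ld // -scalerAr Lc //; apply: memvZ.
  by rewrite -[mono _ _]/(cl_mono c d (kk |: S, kk |: T)); apply: mem_M; apply: gk.
Qed.

Lemma agenv_parts :
  (agenv (gen_span c d) <= cl_part c d false + cl_part c d true)%VS.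
Proof.
apply: subv_trans (agenv_pprod h2 hcl) _.
have -> : enum 'I_n = map inord (iota 0 n).
  rewrite -val_enum_ord -map_comp -[LHS]map_id; apply: eq_map => i /=.
  by rewrite inord_val.
rewrite /pprod foldr_map -/(pprod Qn (iota 0 n)).
apply: subv_trans (pprod_Mset (k := 0) (mm := n) (erefl _)) _.
apply/span_subvP => x /mapP [ST _ ->].
have hm : cl_mono c d ST \in cl_part c d (cl_deg_par ST).
  by apply: memv_span; apply: map_f; rewrite mem_filter eqxx mem_enum.
case: (cl_deg_par ST) hm => hm.
  by apply: subvP (addvSr _ _) _ hm.
by apply: subvP (addvSl _ _) _ hm.
Qed.

End Span.


Section AC.
Variables (K : fieldType) (A : falgType K).
Definition ac (x y : A) := x * y + y * x.
Lemma acC x y : ac x y = ac y x. Proof. by rewrite /ac addrC. Qed.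
Lemma acDl x y w : ac (x + y) w = ac x w + ac y w.
Proof. by rewrite /ac mulrDl mulrDr addrACA. Qed.
Lemma acDr x y w : ac w (x + y) = ac w x + ac w y.
Proof. by rewrite !(acC w) acDl. Qed.
Lemma acZl k x y : ac (k *: x) y = k *: ac x y.
Proof. by rewrite /ac -scalerAl -scalerAr scalerDr. Qed.
Lemma acZr k x y : ac x (k *: y) = k *: ac x y.
Proof. by rewrite !(acC x) acZl. Qed.
Lemma acNl x y : ac (- x) y = - ac x y.
Proof. by rewrite -scaleN1r acZl scaleN1r. Qed.
Lemma acBl x y w : ac (x - y) w = ac x w - ac y w.
Proof. by rewrite acDl acNl. Qed.
Lemma acSl I (r : seq I) (P : pred I) (F : I -> A) y :
  ac (\sum_(i <- r | P i) F i) y = \sum_(i <- r | P i) ac (F i) y.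
Proof. by rewrite /ac mulr_suml mulr_sumr -big_split. Qed.
Lemma acSr I (r : seq I) (P : pred I) (F : I -> A) y :
  ac y (\sum_(i <- r | P i) F i) = \sum_(i <- r | P i) ac y (F i).
Proof. by rewrite acC acSl; apply: eq_bigr => i _; rewrite acC. Qed.
Lemma acNr x y : ac y (- x) = - ac y x.
Proof. by rewrite !(acC y) acNl. Qed.
Lemma acBr x y w : ac w (x - y) = ac w x - ac w y.
Proof. by rewrite acDr acNr. Qed.
Lemma ac0l y : ac 0 y = 0. Proof. by rewrite /ac mul0r mulr0 addr0. Qed.
Lemma ac0r y : ac y 0 = 0. Proof. by rewrite acC ac0l. Qed.

Lemma ac_ker (x : A) (S : {vspace A}) (y : A) :
  (forall s, s \in S -> ac x s = 0) -> y \in S -> ac x y = 0.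
Proof. by move=> h hy; apply: h. Qed.

Definition acker (x : A) : {vspace A} := lker (amull x + amulr x).
Lemma mem_acker x y : (y \in acker x) = (ac x y == 0).
Proof. by rewrite memv_ker add_lfunE amullE amulrE. Qed.
End AC.

Section Main.
Variables (K : numClosedFieldType) (m : nat).
Local Notation N := m.+1.
Variables (z : 'I_N -> K) (hz : forall i, z i != 0).
Variables (A : falgType K) (a b : 'I_N -> A).
Hypothesis hcl : cl_rel a b.
Hypothesis hgen : agenv (gen_span a b) = fullv.
Hypothesis hdim : \dim (fullv : {vspace A}) = (4 ^ N)%N.
Variables (W W' : {vspace A}).
Hypothesis hW : forall w, w \in W = (w \in spanU a) && (cl_pairing a b w (PhiY z b) == 0).
Hypothesis hW' : forall w, w \in W' = (w \in spanU b) && (cl_pairing a b (PhiX z a) w == 0).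
Hypothesis hzz : (\prod_(i < N) z i) ^+ 2 - (\prod_(i < N) z i) ^- 2 != 0.

Local Notation X := (PhiX z a).
Local Notation Y := (PhiY z b).

Lemma h2 : (2%:R : K) != 0. Proof. by rewrite pnatr_eq0. Qed.

Lemma ac_single (e f : 'I_N -> A) (hg : forall i j, e i * f j + f j * e i = (i == j)%:R)
  (l : 'I_N -> K) j : ac (\sum_i l i *: e i) (f j) = l j *: 1.
Proof.
rewrite acSl (bigD1 j) //= big1 ?addr0 => [|i /negPf hij]; rewrite acZl /ac hg ?eqxx //.
by rewrite hij scaler0.
Qed.

Lemma ac_bil (e f : 'I_N -> A) (hg : forall i j, e i * f j + f j * e i = (i == j)%:R)
  (l u : 'I_N -> K) : ac (\sum_i l i *: e i) (\sum_j u j *: f j) = (\sum_i l i * u i) *: 1.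
Proof.
rewrite acSr scaler_suml; apply: eq_bigr => j _; rewrite acZr ac_single //.
by rewrite scalerA mulrC.
Qed.

Lemma ac_bil0 (e f : 'I_N -> A) (hg : forall i j, e i * f j + f j * e i = 0)
  (l u : 'I_N -> K) : ac (\sum_i l i *: e i) (\sum_j u j *: f j) = 0.
Proof.
rewrite acSr big1 // => j _; rewrite acZr acSl big1 ?scaler0 // => i _.
by rewrite acZl /ac hg scaler0.
Qed.

Lemma spanU_coord (e : 'I_N -> A) u : u \in spanU e ->
  u = \sum_i coord [tuple e j | j < N] i u *: e i.
Proof.
move=> hu; rewrite {1}(@coord_span _ _ _ [tuple e j | j < N] u) //.
  by apply: eq_bigr => i _; rewrite -tnth_nth tnth_mktuple.
Qed.

Lemma memU (e : 'I_N -> A) i : e i \in spanU e.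
Proof. by apply: memv_span; apply: map_f; rewrite mem_enum. Qed.

Lemma sumU (e : 'I_N -> A) (l : 'I_N -> K) : \sum_i l i *: e i \in spanU e.
Proof. by apply: memv_suml => i _; apply: memvZ; apply: memU. Qed.

Lemma hab i j : a i * b j + b j * a i = (i == j)%:R. Proof. by case: hcl. Qed.
Lemma hba i j : b i * a j + a j * b i = (i == j)%:R.
Proof. by rewrite addrC hab eq_sym. Qed.
Lemma haa i j : a i * a j + a j * a i = 0. Proof. by case: hcl. Qed.
Lemma hbb i j : b i * b j + b j * b i = 0. Proof. by case: hcl. Qed.

Lemma acUU' u u' : u \in spanU a -> u' \in spanU b ->
  ac u u' = cl_pairing a b u u' *: 1.
Proof.
move=> hu hu'; rewrite [in LHS](spanU_coord hu) [in LHS](spanU_coord hu').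
by rewrite ac_bil //; apply: hab.
Qed.

Lemma acUU u1 u2 : u1 \in spanU a -> u2 \in spanU a -> ac u1 u2 = 0.
Proof.
move=> h1 h2'; rewrite (spanU_coord h1) (spanU_coord h2'); apply: ac_bil0; exact: haa.
Qed.
Lemma acU'U' u1 u2 : u1 \in spanU b -> u2 \in spanU b -> ac u1 u2 = 0.
Proof.
move=> h1 h2'; rewrite (spanU_coord h1) (spanU_coord h2'); apply: ac_bil0; exact: hbb.
Qed.

Lemma XU : X \in spanU a. Proof. exact: sumU. Qed.
Lemma YU : Y \in spanU b. Proof. exact: sumU. Qed.

Definition xc (i : 'I_N) : K := (\prod_(j < N | (j < i)%N) (z j)^-1) * (\prod_(j < N | (i < j)%N) z j).
Definition yc (i : 'I_N) : K :=
  (\prod_(j < N | (j < i)%N) (z j)^-1) * ((z i) ^+ 2 - (z i) ^- 2) * (\prod_(j < N | (i < j)%N) z j).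
Definition kap : K := \sum_i xc i * yc i.

Lemma acXY : ac X Y = kap *: 1.
Proof. by apply: ac_bil; apply: hab. Qed.

Definition Tk (k : nat) : K :=
  (\prod_(j < N | (j < k)%N) (z j)^-1 * \prod_(j < N | (k <= j)%N) z j) ^+ 2.

Lemma xy_tel (i : 'I_N) : xc i * yc i = Tk i - Tk i.+1.
Proof.
have e1 : \prod_(j < N | (i <= j)%N) z j = z i * \prod_(j < N | (i < j)%N) z j.
  rewrite (bigD1 i) ?leqnn //=; congr (_ * _); apply: eq_bigl => j.
  by rewrite [(i < j)%N]ltn_neqAle andbC eq_sym.
have e2 : \prod_(j < N | (j < i.+1)%N) (z j)^-1 = (z i)^-1 * \prod_(j < N | (j < i)%N) (z j)^-1.
  rewrite (bigD1 i) ?ltnSn //=; congr (_ * _); apply: eq_bigl => j.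
  by rewrite ltnS [(j < i)%N]ltn_neqAle andbC.
rewrite /xc /yc /Tk e1 e2 -exprVn; ring.
Qed.

Lemma kapE : kap = (\prod_(i < N) z i) ^+ 2 - (\prod_(i < N) z i) ^- 2.
Proof.
rewrite /kap (eq_bigr (fun i : 'I_N => Tk i - Tk i.+1)); last by move=> i _; apply: xy_tel.
rewrite -(big_mkord xpredT (fun i => Tk i - Tk i.+1)).
rewrite -[LHS]opprK -sumrN (eq_bigr (fun i => Tk i.+1 - Tk i)); last by move=> i _; rewrite opprB.
have t0 : Tk 0 = (\prod_(i < N) z i) ^+ 2.
  rewrite /Tk big_pred0 // mul1r; congr (_ ^+ 2); apply: eq_bigl => j; exact: leq0n.
have tN : Tk N = ((\prod_(i < N) z i)^-1) ^+ 2.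
  rewrite /Tk [X in (_ * X) ^+ 2]big_pred0 => [|j]; last by rewrite /= leqNgt ltn_ord.
  rewrite mulr1 -prodfV; congr (_ ^+ 2); apply: eq_bigl => j; exact: ltn_ord.
by rewrite telescope_sumr // opprB t0 tN exprVn.
Qed.

Lemma kap_neq0 : kap != 0. Proof. by rewrite kapE. Qed.

Lemma scale1_eq0 (k : K) : (k *: (1 : A) == 0) = (k == 0).
Proof. by rewrite scaler_eq0 oner_eq0 orbF. Qed.

Lemma memW w : (w \in W) = (w \in spanU a) && (ac w Y == 0).
Proof. by rewrite hW; case hu: (w \in spanU a) => //=; rewrite (acUU' hu YU) scale1_eq0. Qed.
Lemma memW' w : (w \in W') = (w \in spanU b) && (ac X w == 0).
Proof. by rewrite hW'; case hu: (w \in spanU b) => //=; rewrite (acUU' XU hu) scale1_eq0. Qed.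

Lemma WU : (W <= spanU a)%VS. Proof. by apply/subvP => w; rewrite memW => /andP []. Qed.
Lemma W'U : (W' <= spanU b)%VS. Proof. by apply/subvP => w; rewrite memW' => /andP []. Qed.

Lemma part1a : spanU a = (<[X]> + W)%VS /\ directv (<[X]> + W)%VS.
Proof.
split.
  apply/eqP; rewrite eqEsubv; apply/andP; split; last by rewrite subv_add -memvE XU WU.
  apply/subvP => u hu.
  set t := cl_pairing a b u Y / kap.
  have -> : u = t *: X + (u - t *: X) by rewrite addrC subrK.
  apply: memv_add; first by apply: memvZ; apply: memv_line.
  rewrite memW; apply/andP; split; first by apply: memvB => //; apply: memvZ; apply: XU.
  by rewrite acBl acZl acXY (acUU' hu YU) scalerA -scalerBl /t mulfVK ?kap_neq0 // subrr scale0r.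
apply/directv_addP; apply/eqP; rewrite -subv0; apply/subvP => x.
rewrite memv_cap => /andP [/vlineP [t ->] hw].
move: hw; rewrite memW => /andP [_]; rewrite acZl acXY scalerA scale1_eq0 mulf_eq0.
by rewrite (negPf kap_neq0) orbF => /eqP ->; rewrite scale0r mem0v.
Qed.

Lemma part1b : spanU b = (<[Y]> + W')%VS /\ directv (<[Y]> + W')%VS.
Proof.
split.
  apply/eqP; rewrite eqEsubv; apply/andP; split; last by rewrite subv_add -memvE YU W'U.
  apply/subvP => u hu.
  set t := cl_pairing a b X u / kap.
  have -> : u = t *: Y + (u - t *: Y) by rewrite addrC subrK.
  apply: memv_add; first by apply: memvZ; apply: memv_line.
  rewrite memW'; apply/andP; split; first by apply: memvB => //; apply: memvZ; apply: YU.
  by rewrite acBr acZr acXY (acUU' XU hu) scalerA -scalerBl /t mulfVK ?kap_neq0 // subrr scale0r.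
apply/directv_addP; apply/eqP; rewrite -subv0; apply/subvP => x.
rewrite memv_cap => /andP [/vlineP [t ->] hw].
move: hw; rewrite memW' => /andP [_]; rewrite acZr acXY scalerA scale1_eq0 mulf_eq0.
by rewrite (negPf kap_neq0) orbF => /eqP ->; rewrite scale0r mem0v.
Qed.

Lemma free_e (e f : 'I_N -> A) (hg : forall i j, e i * f j + f j * e i = (i == j)%:R) :
  free [tuple e j | j < N].
Proof.
apply/freeP => k hk i.
have hk' : \sum_j k j *: e j = 0.
  by rewrite -[RHS]hk; apply: eq_bigr => j _; rewrite -tnth_nth tnth_mktuple.
have := ac_single hg k i; rewrite hk' ac0l => /eqP; rewrite eq_sym scale1_eq0 => /eqP //.
Qed.

Lemma dimU_a : \dim (spanU a) = N.
Proof. by have := free_e hab; rewrite /free size_tuple => /eqP. Qed.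
Lemma dimU_b : \dim (spanU b) = N.
Proof. by have := free_e hba; rewrite /free size_tuple => /eqP. Qed.

Lemma X_neq0 : X != 0.
Proof. by apply/eqP => hX; have := acXY; rewrite hX ac0l => /eqP; rewrite eq_sym scale1_eq0 (negPf kap_neq0). Qed.
Lemma Y_neq0 : Y != 0.
Proof. by apply/eqP => hY; have := acXY; rewrite hY ac0r => /eqP; rewrite eq_sym scale1_eq0 (negPf kap_neq0). Qed.

Lemma dimW : \dim W = m.
Proof.
have [e d] := part1a; have := dimU_a; rewrite e dimv_disjoint_sum ?dim_vline ?X_neq0 //.
  by move=> [].
by apply/directv_addP.
Qed.
Lemma dimW' : \dim W' = m.
Proof.
have [e d] := part1b; have := dimU_b; rewrite e dimv_disjoint_sum ?dim_vline ?Y_neq0 //.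
  by move=> [].
by apply/directv_addP.
Qed.

Local Notation VE := (W + W')%VS.
Local Notation VB := (<[X]> + <[Y]>)%VS.
Local Notation E := (agenv VE).
Local Notation B := (agenv VB).
Local Notation G := (gam a b).

Lemma G2 : G * G = 1. Proof. by have := gam2 h2 hcl; apply. Qed.

Lemma gen_odd u : u \in gen_span a b -> G * u = - (u * G).
Proof.
move=> hu; have: u \in acker G.
  apply: subvP hu; rewrite /gen_span subv_add; apply/andP; split;
  apply/span_subvP => v /mapP [i _ ->]; rewrite mem_acker /ac.
    by rewrite (gam_c h2 hcl) addNr.
  by rewrite (gam_d h2 hcl) addNr.
by rewrite mem_acker /ac addr_eq0 => /eqP.
Qed.

Lemma VE_gen : (VE <= gen_span a b)%VS.
Proof. by apply: addvS; [exact: WU | exact: W'U]. Qed.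
Lemma X_gen : X \in gen_span a b.
Proof. by apply: subvP (addvSl _ _) _ XU. Qed.
Lemma Y_gen : Y \in gen_span a b.
Proof. by apply: subvP (addvSr _ _) _ YU. Qed.
Lemma VB_gen : (VB <= gen_span a b)%VS.
Proof. by rewrite subv_add -!memvE X_gen Y_gen. Qed.

Definition sig (x : A) := G * x * G.
Lemma sigM x y : sig (x * y) = sig x * sig y.
Proof. by rewrite /sig !mulrA -(mulrA (G * x) G G) G2 mulr1. Qed.
Lemma sig1 : sig 1 = 1. Proof. by rewrite /sig mulr1 G2. Qed.
Lemma sigK x : sig (sig x) = x.
Proof. by rewrite /sig !mulrA G2 mul1r -mulrA G2 mulr1. Qed.
Lemma sig_odd u : u \in gen_span a b -> sig u = - u.
Proof. by move=> hu; rewrite /sig gen_odd // mulNr -mulrA G2 mulr1. Qed.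
Lemma sigD x y : sig (x + y) = sig x + sig y.
Proof. by rewrite /sig mulrDr mulrDl. Qed.
Lemma sigZ k x : sig (k *: x) = k *: sig x.
Proof. by rewrite /sig -scalerAr -scalerAl. Qed.
Lemma sigN x : sig (- x) = - sig x.
Proof. by rewrite /sig mulrN mulNr. Qed.
Lemma sig0 : sig 0 = 0. Proof. by rewrite /sig mulr0 mul0r. Qed.

Definition sigL : 'End(A) := (amull G \o amulr G)%VF.
Lemma sigLE x : sigL x = sig x.
Proof. by rewrite comp_lfunE amullE amulrE /sig mulrA. Qed.

Lemma compsig (f : 'End(A)) x : (f \o sigL)%VF x = f (sig x).
Proof. by rewrite comp_lfunE sigLE. Qed.

Lemma sigE_E x : x \in E -> sig x \in E.
Proof.
move=> hx; have: x \in (sigL @^-1: E)%VS.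
  apply: subvP hx; apply: agenv_closure.
    by rewrite -memv_preim sigLE sig1 agenv_one.
  move=> v y hv; rewrite -!memv_preim !sigLE sigM => hy.
  rewrite (sig_odd (subvP VE_gen _ hv)) mulNr memvN.
  by apply: agenv_mul => //; apply: agenv_gen.
by rewrite -memv_preim sigLE.
Qed.

Lemma acVB_VE u v : u \in VB -> v \in VE -> ac u v = 0.
Proof.
move=> /memv_addP [u1 /vlineP [s ->] [u2 /vlineP [t ->] ->]].
move=> /memv_addP [w hw [w' hw' ->]].
have e1 : ac X w = 0 by apply: acUU; [exact: XU | exact: subvP WU _ hw].
have e2 : ac X w' = 0 by move: hw'; rewrite memW' => /andP [_ /eqP].
have e3 : ac Y w = 0 by rewrite acC; move: hw; rewrite memW => /andP [_ /eqP].
have e4 : ac Y w' = 0 by apply: acU'U'; [exact: YU | exact: subvP W'U _ hw'].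
by rewrite !acDl !acDr !acZl e1 e2 e3 e4 !scaler0 !addr0.
Qed.

Lemma u_e u e : u \in VB -> e \in E -> u * e = sig e * u.
Proof.
move=> hu he.
have base : amull u 1 = (amulr u \o sigL)%VF 1.
  by rewrite comp_lfunE amullE amulrE sigLE sig1 mulr1 mul1r.
have step : forall v x, v \in VE -> amull u x = (amulr u \o sigL)%VF x ->
    amull u (v * x) = (amulr u \o sigL)%VF (v * x).
  move=> v x hv; rewrite !comp_lfunE !amullE !amulrE !mulrA -/(sig x) -/(sig (v * x)) => hx.
  have huv : u * v = - (v * u).
    by apply/eqP; rewrite -addr_eq0; apply/eqP; exact: acVB_VE.
  have -> : G * v * x * G = sig (v * x) by rewrite /sig !mulrA.
  rewrite huv mulNr -mulrA hx sigM (sig_odd (subvP VE_gen _ hv)) mulNr mulrA.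
  by rewrite mulNr.
by have := agenv_ind base step he; rewrite comp_lfunE amullE amulrE sigLE.
Qed.

Lemma XX0 : X * X = 0.
Proof. by apply: (twice0 h2); have := acUU XU XU. Qed.
Lemma YY0 : Y * Y = 0.
Proof. by apply: (twice0 h2); have := acU'U' YU YU. Qed.
Lemma YXE : Y * X = kap *: 1 - X * Y.
Proof. by rewrite -acXY /ac (addrC (X * Y)) addrK. Qed.

Definition F4 : {vspace A} := span [:: 1; X; Y; X * Y].

Lemma line_E_sub u : u \in VB -> (<[u]> * E <= E * <[u]>)%VS.
Proof.
move=> hu; apply/prodvP => x e /vlineP [k ->] he.
rewrite -scalerAl u_e //; apply: memvZ; apply: memv_mul; [exact: sigE_E | exact: memv_line].
Qed.

Lemma lower : (fullv <= E * F4)%VS.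
Proof.
have F1 : 1 \in F4 by apply: memv_span; rewrite inE eqxx.
have FX : X \in F4 by apply: memv_span; rewrite !inE eqxx !orbT.
have FY : Y \in F4 by apply: memv_span; rewrite !inE eqxx !orbT.
have FXY : X * Y \in F4 by apply: memv_span; rewrite !inE eqxx !orbT.
have key : (gen_span a b * (E * F4) <= E * F4)%VS.
  rewrite [gen_span a b]/(spanU a + spanU b)%VS.
  rewrite (proj1 part1a) (proj1 part1b) !prodvDl !subv_add.
  have hW1 : forall V, (V <= VE)%VS -> (V * (E * F4) <= E * F4)%VS.
    move=> V hV; rewrite prodvA; apply: prodvSl; apply/prodvP => w e hw he.
    by apply: agenv_mul => //; apply: agenv_gen; apply: subvP hV _ hw.
  have hX1 : forall u, u \in VB -> (<[u]> * F4 <= F4)%VS ->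
      (<[u]> * (E * F4) <= E * F4)%VS.
    move=> u hu hF; rewrite prodvA; apply: subv_trans (prodvSl _ (line_E_sub hu)) _.
    by rewrite -prodvA; apply: prodvSr.
  have hXF : (<[X]> * F4 <= F4)%VS.
    apply: line_span_absorb => y; rewrite !inE => /or4P [] /eqP ->.
    + by rewrite mulr1.
    + by rewrite XX0 mem0v.
    + by [].
    + by rewrite mulrA XX0 mul0r mem0v.
  have hYF : (<[Y]> * F4 <= F4)%VS.
    apply: line_span_absorb => y; rewrite !inE => /or4P [] /eqP ->.
    + by rewrite mulr1.
    + by rewrite YXE; apply: memvB => //; apply: memvZ.
    + by rewrite YY0 mem0v.
    + by rewrite mulrA YXE mulrBl -scalerAl mul1r -mulrA YY0 mulr0 subr0; apply: memvZ.
  have hXB : X \in VB by apply: subvP (addvSl _ _) _ (memv_line _).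
  have hYB : Y \in VB by apply: subvP (addvSr _ _) _ (memv_line _).
  apply/andP; split; apply/andP; split.
  - exact: hX1.
  - by apply: hW1; apply: addvSl.
  - exact: hX1.
  - by apply: hW1; apply: addvSr.
rewrite -hgen; apply: agenv_closure.
  by have := memv_mul (agenv_one VE) F1; rewrite mulr1.
move=> v x hv hx; apply: subvP key _ _; exact: memv_mul.
Qed.

Lemma dimE_ge : (4 ^ m <= \dim E)%N.
Proof.
have h := dimvS lower; rewrite hdim in h.
have h' := leq_trans h (dim_prodv _ _).
have hF : (\dim F4 <= 4)%N by apply: leq_trans (dim_span _) _.
have := leq_trans h' (leq_mul (leqnn (\dim E)) hF).
by rewrite expnSr leq_pmul2r.
Qed.

Lemma map_nth_enum (s : seq A) k : size s = k -> map (fun i : 'I_k => s`_i) (enum 'I_k) = s.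
Proof.
move=> <-; rewrite -[RHS](mkseq_nth 0) /mkseq -val_enum_ord -map_comp.
by [].
Qed.

Local Notation n := (\dim W).
Definition cc (i : 'I_n) : A := (vbasis W)`_i.
Definition ee (i : 'I_n) : A := (vbasis W')`_i.

Lemma cc_in i : cc i \in W.
Proof. by apply: vbasis_mem; apply: mem_nth; rewrite size_tuple. Qed.
Lemma ee_in i : ee i \in W'.
Proof. by apply: vbasis_mem; apply: mem_nth; rewrite size_tuple dimW' -dimW. Qed.

Lemma span_cc : <<[seq cc i | i <- enum 'I_n]>>%VS = W.
Proof. by rewrite /cc map_nth_enum ?size_tuple // (span_basis (vbasisP W)). Qed.
Lemma span_ee : <<[seq ee i | i <- enum 'I_n]>>%VS = W'.
Proof.
by rewrite /ee map_nth_enum ?size_tuple ?dimW' ?dimW // (span_basis (vbasisP W')).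
Qed.

Lemma free_cc (k : 'I_n -> K) : \sum_i k i *: cc i = 0 -> forall i, k i = 0.
Proof. by move/freeP: (basis_free (vbasisP W)); apply. Qed.

Definition Gm : 'M[K]_n := \matrix_(i, j) cl_pairing a b (cc i) (ee j).

Lemma ac_ce i j : ac (cc i) (ee j) = Gm i j *: 1.
Proof.
rewrite mxE; apply: acUU'; [exact: subvP WU _ (cc_in i) | exact: subvP W'U _ (ee_in j)].
Qed.

Lemma nondeg w : w \in W -> (forall j, ac w (ee j) = 0) -> w = 0.
Proof.
move=> hw hj.
have hW'0 : forall w', w' \in W' -> ac w w' = 0.
  move=> w' hw'; have: w' \in acker w.
    apply: subvP hw'; rewrite -span_ee; apply/span_subvP => y /mapP [j _ ->].
    by rewrite mem_acker hj.
  by rewrite mem_acker => /eqP.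
have hY : ac w Y = 0 by move: hw; rewrite memW => /andP [_ /eqP].
have hb : forall k, ac w (b k) = 0.
  move=> k; have: b k \in (<[Y]> + W')%VS by rewrite -(proj1 part1b); apply: memU.
  move=> /memv_addP [y1 /vlineP [t ->] [w' hw' ->]].
  by rewrite acDr acZr hY scaler0 add0r; apply: hW'0.
have hwU : w \in spanU a := subvP WU _ hw.
rewrite (spanU_coord hwU); apply: big1 => i _.
have := hb i; rewrite [in LHS](spanU_coord hwU) ac_single; last exact: hab.
by move/eqP; rewrite scale1_eq0 => /eqP ->; rewrite scale0r.
Qed.

Lemma Gm_unit : Gm \in unitmx.
Proof.
rewrite -row_free_unit; apply: inj_row_free => v hv.
set w := \sum_i v 0 i *: cc i.
have hw : w \in W by apply: memv_suml => i _; apply: memvZ; apply: cc_in.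
have hj : forall j, ac w (ee j) = 0.
  move=> j; rewrite /w acSl (eq_bigr (fun i => (v 0 i * Gm i j) *: 1)); last first.
    by move=> i _; rewrite acZl ac_ce scalerA.
  rewrite -scaler_suml; have := congr1 (fun M : 'M_(1, n) => M 0 j) hv.
  by rewrite !mxE => ->; rewrite scale0r.
have w0 := nondeg hw hj.
by apply/rowP => i; rewrite mxE; apply: (free_cc w0).
Qed.

Definition dd (j : 'I_n) : A := \sum_k (invmx Gm) k j *: ee k.

Lemma dd_in j : dd j \in W'.
Proof. by apply: memv_suml => k _; apply: memvZ; apply: ee_in. Qed.

Lemma ac_cd i j : ac (cc i) (dd j) = (i == j)%:R *: 1.
Proof.
rewrite acSr (eq_bigr (fun k => (Gm i k * invmx Gm k j) *: 1)); last first.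
  by move=> k _; rewrite acZr ac_ce scalerA mulrC.
rewrite -scaler_suml; have := congr1 (fun M : 'M_n => M i j) (mulmxV Gm_unit).
by rewrite !mxE => ->.
Qed.

Lemma cl_cd : cl_rel cc dd.
Proof.
split => i j.
- by apply: acUU; apply: subvP WU _ _; apply: cc_in.
- by apply: acU'U'; apply: subvP W'U _ _; apply: dd_in.
- by have := ac_cd i j; rewrite /ac scaler_nat.
Qed.

Lemma span_dd : <<[seq dd i | i <- enum 'I_n]>>%VS = W'.
Proof.
apply/eqP; rewrite eqEdim; apply/andP; split.
  by apply/span_subvP => y /mapP [j _ ->]; apply: dd_in.
have fd : free [tuple dd j | j < n].
  apply/freeP => k hk i.
  have hk' : \sum_j k j *: dd j = 0.
    by rewrite -[RHS]hk; apply: eq_bigr => j _; rewrite -tnth_nth tnth_mktuple.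
  have := congr1 (ac (cc i)) hk'; rewrite ac0r acSr (bigD1 i) //= big1 ?addr0.
    by rewrite acZr ac_cd eqxx scalerA mulr1 => /eqP; rewrite scale1_eq0 => /eqP.
  by move=> j /negPf hij; rewrite acZr ac_cd eq_sym hij scale0r scaler0.
move/eqP: fd; rewrite size_tuple /= => ->.
by rewrite dimW' dimW.
Qed.

Lemma gen_cd : gen_span cc dd = VE.
Proof. by rewrite /gen_span span_cc span_dd. Qed.

Lemma E_cliff : is_clifford_on E cc dd.
Proof.
split.
- by move=> i; split; apply: agenv_gen; [apply: subvP (addvSl _ _) _ (cc_in i)
                                       | apply: subvP (addvSr _ _) _ (dd_in i)].
- exact: cl_cd.
- by rewrite gen_cd.
apply/eqP; rewrite eqn_leq; apply/andP; split.
  by have := dim_agenv_cl h2 cl_cd; rewrite gen_cd.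
by rewrite dimW; apply: dimE_ge.
Qed.

Lemma a_odd i : a i \in cl_part a b true.
Proof.
have -> : a i = cl_mono a b ([set i], set0).
  by rewrite cl_monoE /mono /= big_set1 big_set0 mulr1.
by apply: memv_span; apply: map_f; rewrite mem_filter /cl_deg_par /= cards1 cards0 /= mem_enum.
Qed.
Lemma b_odd i : b i \in cl_part a b true.
Proof.
have -> : b i = cl_mono a b (set0, [set i]).
  by rewrite cl_monoE /mono /= big_set1 big_set0 mul1r.
by apply: memv_span; apply: map_f; rewrite mem_filter /cl_deg_par /= cards1 cards0 /= mem_enum.
Qed.
Lemma X_odd : X \in cl_part a b true.
Proof. by apply: memv_suml => i _; apply: memvZ; apply: a_odd. Qed.
Lemma Y_odd : Y \in cl_part a b true.
Proof. by apply: memv_suml => i _; apply: memvZ; apply: b_odd. Qed.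

Lemma par_sig (p : bool) x : x \in cl_part a b p -> sig x = (-1) ^+ p *: x.
Proof. by move=> hx; rewrite /sig (parP h2 hcl hx) -scalerAl -mulrA G2 mulr1. Qed.

Lemma sig_par (p : bool) x : sig x = (-1) ^+ p *: x -> x \in cl_part a b p.
Proof.
move=> hs; have hx : x \in (cl_part a b false + cl_part a b true)%VS.
  by have := agenv_parts h2 hcl; rewrite hgen => /subvP; apply; apply: memvf.
case/memv_addP: hx => x0 h0 [x1 h1 ex].
have s0 := par_sig h0; have s1 := par_sig h1.
move: hs; rewrite ex sigD s0 s1 /= expr0 expr1 scale1r scaleN1r.
case: p => /=; rewrite ?expr0 ?expr1 ?scale1r ?scaleN1r.
  rewrite opprD => /addIr /eqP; rewrite -addr_eq0 => /eqP /(twice0 h2) ->.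
  by rewrite add0r.
move/addrI/eqP; rewrite eq_sym -addr_eq0 => /eqP /(twice0 h2) ->.
by rewrite addr0.
Qed.

Lemma signA (q : bool) (y : A) : (-1) ^+ q * y = ((-1 : K) ^+ q) *: y.
Proof. by case: q; rewrite /= ?expr0 ?expr1 ?mul1r ?scale1r ?mulN1r ?scaleN1r. Qed.

Lemma supcomm (p q : bool) e g : e \in E -> sig e = (-1) ^+ p *: e ->
  g \in B -> sig g = (-1) ^+ q *: g -> g * e = (-1) ^+ (p && q) * e * g.
Proof.
move=> he hse hg hsg.
have hue : forall u, u \in VB -> u * e = (-1) ^+ p *: (e * u).
  by move=> u hu; rewrite u_e // hse -scalerAl.
case: p hse hue => hse hue /=.
  have base : amulr e 1 = (amull e \o sigL)%VF 1.
    by rewrite compsig amullE amulrE sig1 mul1r mulr1.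
  have step : forall v x, v \in VB -> amulr e x = (amull e \o sigL)%VF x ->
      amulr e (v * x) = (amull e \o sigL)%VF (v * x).
    move=> v x hv; rewrite !compsig !amullE !amulrE => hx.
    rewrite -mulrA hx mulrA hue // expr1 scaleN1r mulNr sigM (sig_odd (subvP VB_gen _ hv)).
    by rewrite mulNr mulrN mulrA.
  have := agenv_ind base step hg; rewrite compsig amullE amulrE => ->.
  by rewrite hsg -scalerAr signA -scalerAl.
have base : amulr e 1 = amull e 1 by rewrite amullE amulrE mul1r mulr1.
have step : forall v x, v \in VB -> amulr e x = amull e x -> amulr e (v * x) = amull e (v * x).
  move=> v x hv; rewrite !amullE !amulrE => hx.
  by rewrite -mulrA hx mulrA hue // expr0 scale1r mulrA.
by have := agenv_ind base step hg; rewrite amullE amulrE => ->; rewrite mul1r.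
Qed.

Lemma memEline v w : w \in (E * <[v]>)%VS -> exists2 e, e \in E & w = e * v.
Proof. by rewrite -limg_amulr => /memv_imgP [e he ->]; exists e; rewrite ?amulrE. Qed.

Lemma Xe e : e \in E -> X * e = sig e * X.
Proof. by apply: u_e; apply: subvP (addvSl _ _) _ (memv_line _). Qed.
Lemma Ye e : e \in E -> Y * e = sig e * Y.
Proof. by apply: u_e; apply: subvP (addvSr _ _) _ (memv_line _). Qed.

Lemma mXX t : t * X * X = 0. Proof. by rewrite -mulrA XX0 mulr0. Qed.
Lemma mYY t : t * Y * Y = 0. Proof. by rewrite -mulrA YY0 mulr0. Qed.
Lemma XYX : X * Y * X = kap *: X.
Proof. by rewrite -mulrA YXE mulrBr -scalerAr mulr1 mulrA XX0 mul0r subr0. Qed.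
Lemma YXY : Y * X * Y = kap *: Y.
Proof. by rewrite YXE mulrBl -scalerAl mul1r -mulrA YY0 mulr0 subr0. Qed.
Lemma mXYX t : t * X * Y * X = kap *: (t * X).
Proof. by rewrite -!mulrA (mulrA X) XYX -scalerAr. Qed.
Lemma mYXY t : t * Y * X * Y = kap *: (t * Y).
Proof. by rewrite -!mulrA (mulrA Y) YXY -scalerAr. Qed.

Lemma sc_core y : X * y = sig y * X -> Y * y = sig y * Y -> y \in E.
Proof.
move=> hX hY.
have hy : y \in (E * F4)%VS by apply: subvP lower _ (memvf y).
move: hy; rewrite /F4 !span_cons span_nil addv0 !prodvDr.
case/memv_addP => w0 hw0 [r1 hr1 ey].
case/memEline: hw0 => e0 h0 ew0.
case/memv_addP: hr1 => w1 hw1 [r2 hr2 er1].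
case/memEline: hw1 => e1 h1 ew1.
case/memv_addP: hr2 => w2 hw2 [w3 hw3 er2].
case/memEline: hw2 => e2 h2' ew2.
case/memEline: hw3 => e3 h3 ew3.
rewrite er1 er2 ew0 ew1 ew2 ew3 mulr1 in ey.
have S1 : sig y * X * Y = sig e0 * X * Y.
  rewrite -hX ey !mulrDr !mulrDl !mulrA (Xe h0) (Xe h1) (Xe h2') (Xe h3) !mXX !mYY !mul0r.
  by rewrite !addr0.
have S2 : sig y * Y * X = sig e0 * Y * X + kap *: (sig e3 * Y * X).
  rewrite -hY ey !mulrDr !mulrDl !mulrA (Ye h0) (Ye h1) (Ye h2') (Ye h3) !mXX !mYY mYXY.
  by rewrite !mul0r !add0r -scalerAl.
have hsy : sig y = sig e0 + sig e3 * Y * X.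
  apply: (scalerI kap_neq0).
  have kE : forall t, kap *: t = t * X * Y + t * Y * X.
    by move=> t; rewrite -!mulrA -mulrDr -/(ac X Y) acXY -scalerAr mulr1.
  by rewrite kE S1 S2 scalerDr addrA -kE.
have hy2 : y = e0 + e3 * (Y * X).
  rewrite -[y]sigK hsy sigD (sigM (sig e3 * Y) X) (sigM (sig e3) Y) !sigK (sig_odd Y_gen) (sig_odd X_gen).
  by rewrite !mulrN !mulNr opprK mulrA.
have S4 : kap *: (sig e3 * Y) = 0.
  move: hY; rewrite {1}hy2 hsy mulrDr mulrA (Ye h0) mulrA (Ye h3) mYY mulrDl mYXY mul0r addr0.
  by move=> h; apply: (addrI (sig e0 * Y)); rewrite addr0 -h.
have S5 : sig e3 * Y = 0.
  by move/eqP: S4; rewrite scaler_eq0 (negPf kap_neq0) => /eqP.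
rewrite hy2; have -> : e3 * (Y * X) = sig (sig e3 * Y * X).
  by rewrite (sigM (sig e3 * Y) X) (sigM (sig e3) Y) sigK (sig_odd Y_gen) (sig_odd X_gen) !mulrN !mulNr opprK mulrA.
by rewrite S5 mul0r sig0 addr0.
Qed.

Lemma sc_iff x : x \in E <-> in_supercommutant a b B x.
Proof.
split.
- move=> hx.
  set x0 := (2%:R : K)^-1 *: (x + sig x).
  set x1 := (2%:R : K)^-1 *: (x - sig x).
  have hs0 : sig x0 = (-1) ^+ false *: x0.
    by rewrite expr0 scale1r /x0 sigZ sigD sigK addrC.
  have hs1 : sig x1 = (-1) ^+ true *: x1.
    by rewrite expr1 scaleN1r /x1 sigZ sigD sigN sigK -scalerN opprB addrC.
  have hE0 : x0 \in E by apply: memvZ; apply: memvD => //; apply: sigE_E.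
  have hE1 : x1 \in E by apply: memvZ; apply: memvB => //; apply: sigE_E.
  have hsc : forall (p : bool) c, c \in E -> sig c = (-1) ^+ p *: c -> supercomm_hom a b B p c.
    move=> p c hc hsc; split; first exact: sig_par.
    move=> q g; rewrite memv_cap => /andP [hg hgq].
    by apply: supcomm => //; apply: par_sig.
  exists 2, (fun t : 'I_2 => if t == ord0 then x0 else x1), (fun=> 1); split.
    by move=> t; case: (t == ord0); [exists false | exists true]; apply: hsc.
  rewrite big_ord_recl big_ord1 /= !scale1r /x0 /x1 -scalerDr addrACA subrr addr0.
  by rewrite -mulr2n -scaler_nat scalerA mulVf ?h2 // scale1r.
- case=> k [c [l [hc ->]]].
  apply: memv_suml => t _; apply: memvZ.
  have [p [hcp hsc]] := hc t.
  have hsp := par_sig hcp.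
  have XB : X \in (B :&: cl_part a b true)%VS.
    by rewrite memv_cap X_odd andbT; apply: agenv_gen; apply: subvP (addvSl _ _) _ (memv_line _).
  have YB : Y \in (B :&: cl_part a b true)%VS.
    by rewrite memv_cap Y_odd andbT; apply: agenv_gen; apply: subvP (addvSr _ _) _ (memv_line _).
  apply: sc_core.
    by rewrite (hsc true X XB) andbT signA hsp.
  by rewrite (hsc true Y YB) andbT signA hsp.
Qed.

End Main.

Unset Implicit Arguments.

Theorem mainTheorem2
  (K : numClosedFieldType) (N : nat) (hN : (0 < N)%N)
  (z : 'I_N -> K) (hz : forall i, z i != 0) (nn : 'I_N -> K)
  (A : falgType K) (a b : 'I_N -> A)
  (hCl : is_clifford_on fullv a b)
  (W W' : {vspace A})
  (hW : forall w, w \in W = (w \in spanU a) && (cl_pairing a b w (PhiY z b) == 0))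
  (hW' : forall w, w \in W' = (w \in spanU b) && (cl_pairing a b (PhiX z a) w == 0))
  (hzz : (\prod_(i < N) z i) ^+ 2 - (\prod_(i < N) z i) ^- 2 != 0) :
  [/\ spanU a = (<[PhiX z a]> + W)%VS /\ directv (<[PhiX z a]> + W)%VS,
      spanU b = (<[PhiY z b]> + W')%VS /\ directv (<[PhiY z b]> + W')%VS,
      exists c d : 'I_(\dim W) -> A, is_clifford_on (agenv (W + W')%VS) c d &
      forall x, x \in agenv (W + W')%VS <->
        in_supercommutant a b (agenv (<[PhiX z a]> + <[PhiY z b]>)%VS) x].
Proof.
case: N hN z hz nn a b hCl hW hW' hzz => // m _ z hz _ a b [_ hcl hgen hdim] hW hW' hzz.
split.
- exact: (part1a hcl hW hzz).
- exact: (part1b hcl hW' hzz).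
- exists (@cc _ _ W), (@dd _ _ _ a b W W').
    exact: (E_cliff hcl hgen hdim hW hW' hzz).
  by move=> x; apply: (sc_iff hcl hgen hW hW' hzz).
Qed.
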